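(* Let $Y$ be a spectrally positive Lévy process and let $X$ be the process controlled by the control band policy with parameters $a<\alpha\le\beta<b$, with stopping times $\tau^*_n$ as in the context. Let $n^*_\alpha=\inf\{n\ge1:X(\tau^*_n)=\alpha\}$. Then $E_\alpha[\tau^*_{n^*_\alpha}]<\infty$.
   Context: $Y$ is a Lévy process with $Y_0=x$ under $P_x$ (expectation $E_x$), Lévy measure $\nu$ with $\int_{\{|y|\ge1\}}|y|\nu(dy)<\infty$; spectrally positive means $\nu((-\infty,0))=0$ and $Y$ is not a subordinator. The control band policy with parameters $a<\alpha\le\beta<b$: $\tau^*_0=0$, $\tau^*_1=\inf\{t\ge0:X_{t-}+\Delta Y_t\notin(a,b)\}$, $\tau^*_n=\inf\{t>\tau^*_{n-1}:X_{t-}+\Delta Y_t\notin(a,b)\}$ for $n\ge2$ (with $X_{0-}=x$, $\Delta Y_0=0$); at $\tau^*_n$ the controlled process jumps to $\beta$ if $X_{\tau^*_n-}+\Delta Y_{\tau^*_n}\ge b$ and to $\alpha$ if $X_{\tau^*_n-}+\Delta Y_{\tau^*_n}\le a$; between interventions $X$ moves as $Y$ (i.e. $X_t=Y_t+\sum_i 1_{\{\tau^*_i\le t\}}\xi^*_i$ with $\xi^*_i$ the intervention sizes). *)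

(* Defs.v *)
From HB Require Import structures.
From mathcomp Require Import all_boot all_order all_algebra.
From mathcomp Require Import all_classical all_reals all_analysis.
Set Implicit Arguments. Unset Strict Implicit. Unset Printing Implicit Defensive.
Import Order.TTheory GRing.Theory Num.Theory.
Import numFieldNormedType.Exports.
Local Open Scope classical_set_scope.
Local Open Scope ring_scope.

Section Levy.
Context {R : realType} {d : measure_display} {T : measurableType d}.

(* Time is nonnegative real; values of a path at negative times are never used. *)

Definition cadlag_path (f : R -> R) : Prop :=
  (forall t, 0 <= t -> f @ t^'+ --> f t) /\
  (forall t, 0 < t -> cvg (f @ t^'-)).

(* Jump of a path at time t; by convention Delta f 0 = 0. *)
Definition jump (f : R -> R) (t : R) : R :=
  if t <= 0 then 0 else f t - lim (f @ t^'-).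

(* Levy process started at 0 (the law under P_x is that of x + Y). *)
Definition is_levy (P : probability T R) (Y : R -> T -> R) : Prop :=
  [/\ (forall t, measurable_fun setT (Y t)),
      (forall w, Y 0 w = 0),
      (forall w, cadlag_path (Y ^~ w)),
      (forall s t (B : set R), 0 <= s -> 0 <= t -> measurable B ->
         P [set w | B (Y (s + t) w - Y s w)] = P [set w | B (Y t w)]) &
      (forall (n : nat) (tt : nat -> R) (B : nat -> set R),
         0 <= tt 0%N -> (forall i, tt i <= tt i.+1) ->
         (forall i, measurable (B i)) ->
         P (\bigcap_(i in [set i | (i < n)%N])
              [set w | B i (Y (tt i.+1) w - Y (tt i) w)])
         = (\prod_(i < n) P [set w | B i (Y (tt i.+1) w - Y (tt i) w)%R])%E)].

Definition jump_times (f : R -> R) (A : set R) : set R :=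
  [set t | 0 < t <= 1 /\ jump f t != 0 /\ A (jump f t)].

(* Levy measure = intensity of the jump measure:
   nu(A) = E[ #{ t in (0,1] : Delta Y_t <> 0, Delta Y_t in A } ]. *)
Definition levy_measure (P : probability T R) (Y : R -> T -> R) (A : set R)
  : \bar R :=
  \int[P]_w (\esum_(t in jump_times (Y ^~ w) A) 1%E).

(* \int_{|y| >= 1} |y| nu(dy) < oo, with nu the jump intensity measure above,
   i.e. E[ sum_{t in (0,1], |Delta Y_t| >= 1} |Delta Y_t| ] < oo. *)
Definition levy_tail_moment_finite (P : probability T R) (Y : R -> T -> R)
  : Prop :=
  (\int[P]_w (\esum_(t in jump_times (Y ^~ w) [set y : R | (1 <= `|y|)%R])
                 (`|jump (Y ^~ w) t|)%:E) < +oo)%E.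

Definition subordinator (P : probability T R) (Y : R -> T -> R) : Prop :=
  is_levy P Y /\
  {ae P, forall w, forall s t, 0 <= s -> s <= t -> Y s w <= Y t w}.

Definition spectrally_positive (P : probability T R) (Y : R -> T -> R)
  : Prop :=
  levy_measure P Y `]-oo, 0[ = 0%E /\ ~ subordinator P Y.

End Levy.

Section Band.
Context {R : realType}.

(* First time t (t > s if strict, t >= s otherwise) at which
   X_{t-} + Delta Y_t = p + f t - f s leaves (a, b); +oo if never. *)
Definition exit_time (f : R -> R) (a b p s : R) (strict : bool) : \bar R :=
  ereal_inf [set t%:E | t in [set t | (if strict then s < t else s <= t)
                                      /\ ~ (a < p + f t - f s < b)]].

(* band_state f a alpha beta b x n = (tau*_n, X(tau*_n)) for the control band
   policy driven by the path Y_t = x + f t (f 0 = 0), X_{0-} = x. *)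
Fixpoint band_state (f : R -> R) (a alpha beta b x : R) (n : nat)
  : \bar R * R :=
  match n with
  | 0%N => (0%:E, x)
  | m.+1 =>
    let: (tau, p) := band_state f a alpha beta b x m in
    match tau with
    | r%:E =>
      let tau' := exit_time f a b p r (m != 0%N) in
      (tau', match tau' with
             | r'%:E => if b <= p + f r' - f r then beta else alpha
             | _ => p
             end)
    | _ => (+oo%E, p)
    end
  end.

Definition band_tau f a alpha beta b x n := (band_state f a alpha beta b x n).1.
Definition band_pos f a alpha beta b x n := (band_state f a alpha beta b x n).2.

(* tau*_{n*_alpha} with n*_alpha = inf{n >= 1 : X(tau*_n) = alpha}
   (+oo if there is no such n). Since n |-> tau*_n is nondecreasing,
   the infimum below equals tau*_{n*_alpha}. *)
Definition tau_at_nstar (f : R -> R) (a alpha beta b x : R) : \bar R :=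
  ereal_inf [set band_tau f a alpha beta b x n | n in
     [set n : nat | (1 <= n)%N /\ band_tau f a alpha beta b x n < +oo /\
              band_pos f a alpha beta b x n = alpha]]%E.

End Band.

(* Main.v *)
Require Import Defs.
From HB Require Import structures.
From mathcomp Require Import all_boot all_order all_algebra.
From mathcomp Require Import all_classical all_reals all_analysis.
From mathcomp Require Import lra.
From mathcomp Require Import measurable_realfun.
Import Order.TTheory GRing.Theory Num.Theory.
Import numFieldNormedType.Exports.
Local Open Scope classical_set_scope.
Local Open Scope ring_scope.

Section Det.
Context {R : realType}.

Lemma no_acc (g : R -> R) (u : nat -> R) (dl T : R) :
  (forall t, 0 < t -> cvg (g @ t^'-)) -> 0 < dl ->
  (forall n, 0 <= u n) -> (forall n, u n <= T) -> (forall n, u n <= u n.+1) ->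
  (forall n, dl <= g (u n.+1) - g (u n)) -> False.
Proof.
move=> gl dl0 u0 uT und ud.
have ult n : u n < u n.+1.
  rewrite lt_neqAle und andbT; apply/eqP => e; have := ud n; rewrite e subrr; lra.
pose l := sup (range u).
have hs : has_sup (range u).
  by split; [exists (u 0%N), 0%N|exists T => _ [n _ <-]].
have ul n : u n < l.
  by apply: (lt_le_trans (ult n)); apply: sup_upper_bound => //; exists n.+1.
have l0 : 0 < l by apply: le_lt_trans (ul 0%N).
have HL := gl l l0.
have /cvgrPdist_lt/(_ (dl / 2)) := HL.
have dl2 : 0 < dl / 2 by lra.
move=> /(_ dl2).
rewrite /within => /nbhs_ballP [e /= e0 He].
have [_ [n _ <-] ln] := sup_adherent e0 hs.
have bn k : (n <= k)%N -> `|lim (g @ l^'-) - g (u k)| < dl / 2.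
  move=> nk; apply: He; last exact: ul.
  rewrite /ball /= ger0_norm ?subr_ge0 ?(ltW (ul k)) //.
  suff : u n <= u k by move: ln; rewrite /l; lra.
  elim: k nk => [|k IH]; first by rewrite leqn0 => /eqP ->.
  rewrite leq_eqVlt => /orP [/eqP -> //| nk].
  exact: le_trans (IH nk) (und k).
have h1 := bn n (leqnn n).
have h2 := bn n.+1 (leqnSn n).
have := ud n.
move: h1 h2; rewrite !ltr_norml; lra.
Qed.

Variables (f : R -> R) (a alpha beta b : R).

Lemma exit_le (p s t : R) (st : bool) :
  (if st then s < t else s <= t) -> ~~ (a < p + f t - f s < b) ->
  (exit_time f a b p s st <= t%:E)%E.
Proof. by move=> h1 /negP h2; apply: ereal_inf_lbound; exists t. Qed.
Arguments exit_le {p s t st}.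

Lemma exit_ge (p s : R) (st : bool) : (s%:E <= exit_time f a b p s st)%E.
Proof.
apply: le_ereal_inf_tmp => _ [t [h1 _] <-]; rewrite lee_fin.
by case: st h1 => // /ltW.
Qed.

Lemma exit_in (p s t : R) (st : bool) :
  (if st then s < t else s <= t) -> (t%:E < exit_time f a b p s st)%E ->
  a < p + f t - f s < b.
Proof.
move=> h1 h2; case E: (a < _ < b) => //.
by have := exit_le h1 (negbT E); rewrite leNgt h2.
Qed.
Arguments exit_in {p s t st}.

Lemma bs_step x n r : band_tau f a alpha beta b x n = r%:E ->
  band_tau f a alpha beta b x n.+1 =
    exit_time f a b (band_pos f a alpha beta b x n) r (n != 0%N) /\
  (forall r', band_tau f a alpha beta b x n.+1 = r'%:E ->
     band_pos f a alpha beta b x n.+1 =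
     if b <= band_pos f a alpha beta b x n + f r' - f r then beta else alpha).
Proof.
rewrite /band_tau /band_pos /=; case: (band_state _ _ _ _ _ _ n) => tau p /= ->.
by split => // r' /= ->.
Qed.
Arguments bs_step {x n r}.

Lemma det_bound s T : cadlag_path f -> f 0 = 0 -> a < alpha -> alpha <= beta ->
  beta < b -> 0 <= s -> s < T -> f T - f s <= a - b ->
  (tau_at_nstar f a alpha beta b alpha <= T%:E)%E.
Proof.
move=> [_ fl] f0 aal albe beb s0 sT fTs.
rewrite leNgt; apply/negP => Tlt.
pose tau n := band_tau f a alpha beta b alpha n.
pose pos n := band_pos f a alpha beta b alpha n.
have H n : (1 <= n)%N -> (tau n <= T%:E)%E -> pos n != alpha.
  move=> n1 tT; apply/negP => /eqP pa.
  have : (tau_at_nstar f a alpha beta b alpha <= tau n)%E.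
    apply: ereal_inf_lbound; exists n => //; split => //; split => //.
    by rewrite (le_lt_trans tT) ?ltry.
  by move=> /le_trans/(_ tT); rewrite leNgt Tlt.
have step n r : tau n = r%:E -> 0 <= r <= T ->
    (r <= s \/ pos n + f T - f r < a) -> a < pos n -> pos n <= beta ->
    exists r', [/\ tau n.+1 = r'%:E, r <= r', b - beta <= f r' - f r,
      0 <= r' <= T & [/\ r' <= s \/ pos n.+1 + f T - f r' < a,
      a < pos n.+1 & pos n.+1 <= beta]].
  move=> E /andP [r0 rT] disj apn pnbe.
  have [E1 E2] := bs_step E.
  rewrite -/(tau n.+1) -/(pos n) in E1 E2.
  have adm : forall t, r < t -> if n != 0%N then r < t else r <= t.
    by move=> t rt; case: (n != 0%N) => //; exact: ltW.
  have [tle|tgt] := leP (tau n.+1) s%:E.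
  - have tge : (r%:E <= tau n.+1)%E by rewrite E1; exact: exit_ge.
    case E': (tau n.+1) tle tge => [r'||] //; rewrite ?lee_fin => r's rr'.
    have hp := E2 r' E'; rewrite -/(pos n.+1) in hp.
    have hb : b <= pos n + f r' - f r.
      case: (leP b _) hp => // _ hp; have := H n.+1 isT.
      by rewrite E' lee_fin hp eqxx; move/(_ (le_trans r's (ltW sT))).
    rewrite hp hb in H *; exists r'; split => //; try lra.
    by split; [left|lra|lra].
  - have preT : pos n + f T - f r < a.
      case: disj => // rs.
      have hX : a < pos n + f s - f r < b.
        have [rs'|] := eqVneq r s.
          by rewrite rs' addrK; apply/andP; split; lra.
        move=> rns; have rlts : r < s by rewrite lt_neqAle rns rs.
        have := @exit_in (pos n) r s (n != 0%N) (adm _ rlts); rewrite -E1; apply; done.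
      by move: hX => /andP [_ hX]; lra.
    have rT' : r < T.
      rewrite lt_neqAle rT andbT; apply/eqP => rT''.
      by move: preT; rewrite rT'' addrK; lra.
    have tle : (tau n.+1 <= T%:E)%E.
      rewrite E1; apply: exit_le; first exact: adm.
      by apply/negP => /andP [h _]; lra.
    have tge : (r%:E <= tau n.+1)%E by rewrite E1; exact: exit_ge.
    case E': (tau n.+1) tle tge => [r'||] //; rewrite ?lee_fin => r'T rr'.
    have hp := E2 r' E'; rewrite -/(pos n.+1) in hp.
    have hb : b <= pos n + f r' - f r.
      case: (leP b _) hp => // _ hp; have := H n.+1 isT.
      by rewrite E' lee_fin hp eqxx; move/(_ r'T).
    rewrite hp hb in H *; exists r'; split => //; try lra.
    by split; [right|lra|lra]; lra.
have Q n : exists r, [/\ tau n = r%:E, 0 <= r <= T,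
    (r <= s \/ pos n + f T - f r < a), a < pos n & pos n <= beta].
  elim: n => [|n [r [E rr d1 d2 d3]]].
    exists 0; split => //; first (by apply/andP; split; lra); first by left.
  have [r' [E' _ _ h1 [h2 h3 h4]]] := step n r E rr d1 d2 d3.
  by exists r'; split.
pose u n := fine (tau n).
have uE n : tau n = (u n)%:E by have [r [E _ _ _ _]] := Q n; rewrite /u E.
apply: (@no_acc f u (b - beta) T fl).
- by rewrite subr_gt0.
- by move=> n; have [r [E /andP[r0 _] _ _ _]] := Q n; rewrite /u E.
- by move=> n; have [r [E /andP[_ rT] _ _ _]] := Q n; rewrite /u E.
- move=> n; have [r [E rr d1 d2 d3]] := Q n.
  have [r' [E' rr' _ _ _]] := step n r E rr d1 d2 d3.
  by rewrite /u E E'.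
- move=> n; have [r [E rr d1 d2 d3]] := Q n.
  have [r' [E' _ hd _ _]] := step n r E rr d1 d2 d3.
  by rewrite /u E E'.
Qed.
End Det.

Section RC.
Context {R : realType}.

Lemma rc_le (g : R -> R) x z c : x < z -> g @ x^'+ --> g x ->
  (forall q : rat, x < ratr q < z -> g (ratr q) <= c) -> g x <= c.
Proof.
move=> xz gx H; rewrite leNgt; apply/negP => cg.
have e0 : 0 < g x - c by rewrite subr_gt0.
have /cvgrPdist_lt/(_ _ e0) := gx.
rewrite /within => /nbhs_ballP [e /= ep He].
have xm : x < Order.min (x + e) z by rewrite lt_min xz andbT ltrDl.
have [q] := rat_in_itvoo xm; rewrite in_itv /= lt_min => /andP [xq /andP [qe qz]].
have := He (ratr q); rewrite /ball /= ltr0_norm ?subr_lt0 // => /(_ _ xq).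
have := H q; rewrite xq qz => /(_ isT).
move=> h1 h2; have : - (x - ratr q) < e by lra.
move/h2; rewrite ltr_norml; lra.
Qed.
Arguments rc_le {g x z c}.

Lemma rc_ge (g : R -> R) x z c : x < z -> g @ x^'+ --> g x ->
  (forall q : rat, x < ratr q < z -> c <= g (ratr q)) -> c <= g x.
Proof.
move=> xz gx H; rewrite leNgt; apply/negP => cg.
have e0 : 0 < c - g x by rewrite subr_gt0.
have /cvgrPdist_lt/(_ _ e0) := gx.
rewrite /within => /nbhs_ballP [e /= ep He].
have xm : x < Order.min (x + e) z by rewrite lt_min xz andbT ltrDl.
have [q] := rat_in_itvoo xm; rewrite in_itv /= lt_min => /andP [xq /andP [qe qz]].
have := He (ratr q); rewrite /ball /= ltr0_norm ?subr_lt0 // => /(_ _ xq).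
have := H q; rewrite xq qz => /(_ isT).
move=> h1 h2; have : - (x - ratr q) < e by lra.
move/h2; rewrite ltr_norml; lra.
Qed.
Arguments rc_ge {g x z c}.

Lemma mono_from_rat (g : R -> R) : cadlag_path g ->
  (forall q1 q2 : rat, 0 <= (ratr q1 : R) -> (ratr q1 : R) <= ratr q2 -> g (ratr q1) <= g (ratr q2)) ->
  forall s t, 0 <= s -> s <= t -> g s <= g t.
Proof.
move=> [gr _] Hq s t s0 st.
have C1 q : s < ratr q -> g s <= g (ratr q).
  move=> sq; apply: (rc_le sq (gr _ s0)) => q' /andP [sq' q'q].
  apply: Hq; lra.
have t1 : t < t + 1 by lra.
apply: (rc_ge t1 (gr _ (le_trans s0 st))) => q /andP [tq _].
apply: C1; lra.
Qed.


End RC.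

Section Prob.
Context {R : realType} {d : measure_display} {T : measurableType d}.
Variables (P : probability T R) (Y : R -> T -> R).

Lemma mpre (g : T -> R) (B : set R) : measurable_fun setT g -> measurable B ->
  measurable [set w | B (g w)].
Proof. by move=> mg mB; have := mg measurableT B mB; rewrite setTI. Qed.
Arguments mpre {g B}.

Lemma mlt (g : T -> R) c : measurable_fun setT g -> measurable [set w | g w < c].
Proof.
move=> mg; have := mpre mg (measurable_itv `]-oo, c[).
congr measurable; apply/seteqP; split => w /=; by rewrite in_itv.
Qed.
Arguments mlt {g} c.

Lemma exists_neg : is_levy P Y -> ~ subordinator P Y ->
  exists t0 eps, [/\ 0 <= t0, 0 < eps & (0 < P [set w | (Y t0 w < - eps)%R])%E].
Proof.
move=> hl ns; apply: contrapT => hn; apply: ns; split => //.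
case: hl => mY Y0 cY stY _.
have mlY t c : measurable [set w | Y t w < c] := mlt c (mY t).
have z0 t : 0 <= t -> P [set w | Y t w < 0] = 0%E.
  move=> t0.
  have E : [set w | Y t w < 0] = \bigcup_n [set w | Y t w < - (n.+1%:R)^-1].
    apply/seteqP; split => w /=.
    - move=> /ltr_add_invr [k hk]; exists k => //=; by rewrite -subr_lt0 opprK.
    - by move=> [n _ /= h]; apply: lt_trans h _; rewrite oppr_lt0 invr_gt0.
  have : P.-negligible (\bigcup_n [set w | Y t w < - (n.+1%:R)^-1]).
    apply: negligible_bigcup => n; apply/negligibleP; first exact: mlY.
    apply/eqP; rewrite eq_le measure_ge0 andbT leNgt; apply/negP => hp.
    by apply: hn; exists t, (n.+1%:R^-1); split => //; rewrite invr_gt0.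
  by rewrite -E => /negligibleP; apply; exact: mlY.
pose D (qq : rat * rat) : set T :=
  if (0 <= (ratr qq.1 : R)) && ((ratr qq.1 : R) <= ratr qq.2) then
    [set w | Y (ratr qq.2) w - Y (ratr qq.1) w < 0] else set0.
have nD qq : P.-negligible (D qq).
  rewrite /D; case: ifP => [/andP [h1 h2]|_]; last exact: negligible_set0.
  have mB : measurable [set x : R | x < 0].
    have := measurable_itv (`]-oo, 0[ : interval R).
    by congr measurable; apply/seteqP; split => x /=; rewrite in_itv.
  have h3 : 0 <= (ratr qq.2 : R) - ratr qq.1 by rewrite subr_ge0.
  have := stY (ratr qq.1) (ratr qq.2 - ratr qq.1) _ h1 h3 mB.
  rewrite subrKC /= => E.
  apply/negligibleP.
    by apply: mlt; apply: measurable_realfun.measurable_funB; exact: mY.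
  exact: (etrans E (z0 _ h3)).
pose F (k : nat) : set T :=
  if @pickle_inv (rat * rat)%type k is Some qq then D qq else set0.
have nF : P.-negligible (\bigcup_k F k).
  apply: negligible_bigcup => k; rewrite /F.
  by case: pickle_inv => [qq|]; [exact: nD|exact: negligible_set0].
apply: negligibleS nF => w /= hw; apply: contrapT => hF; apply: hw.
apply: mono_from_rat (cY w) _ => q1 q2 h1 h2.
rewrite leNgt; apply/negP => hlt; apply: hF.
exists (pickle (q1, q2)); first by [].
rewrite /F pickleK_inv.
change (D (q1, q2) w); rewrite /D.
have -> : (0 <= (ratr (q1, q2).1 : R)) && ((ratr (q1, q2).1 : R) <= ratr (q1, q2).2).
  by apply/andP; split.
change (Y (ratr q2) w - Y (ratr q1) w < 0).
by rewrite subr_lt0.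
Qed.

Lemma mle (g : T -> R) c : measurable_fun setT g -> measurable [set w | g w <= c].
Proof.
move=> mg; have := mpre mg (measurable_itv `]-oo, c]).
congr measurable; apply/seteqP; split => w /=; by rewrite in_itv.
Qed.
Arguments mle {g} c.

Lemma mgt (g : T -> R) c : measurable_fun setT g -> measurable [set w | c < g w].
Proof.
move=> mg; have := mpre mg (measurable_itv `]c, +oo[).
congr measurable; apply/seteqP; split => w /=; by rewrite in_itv /= andbT.
Qed.
Arguments mgt {g} c.

Lemma mR_lt (c : R) : measurable [set x : R | x < c].
Proof.
have := measurable_itv (`]-oo, c[ : interval R).
by congr measurable; apply/seteqP; split => x /=; rewrite in_itv.
Qed.

Lemma mR_gt (c : R) : measurable [set x : R | c < x].
Proof.
have := measurable_itv (`]c, +oo[ : interval R).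
by congr measurable; apply/seteqP; split => x /=; rewrite in_itv /= andbT.
Qed.

Lemma pos_drop t0 eps : is_levy P Y -> 0 <= t0 -> 0 < eps ->
  (0 < P [set w | (Y t0 w < - eps)%R])%E -> forall m : nat,
  (0 < P [set w | (Y (m%:R * t0) w <= - (m%:R * eps))%R])%E.
Proof.
move=> hl t00 e0 qp m.
have [mY Y0 cY stY indY] := hl.
pose B (i : nat) := [set x : R | x < - eps].
have mB i : measurable (B i) by exact: mR_lt.
pose tt (i : nat) : R := i%:R * t0.
have tt0 : 0 <= tt 0%N by rewrite /tt mul0r.
have ttge i : 0 <= tt i by rewrite /tt mulr_ge0.
have ttn i : tt i <= tt i.+1 by rewrite /tt ler_wpM2r // ler_nat.
have := indY m tt B tt0 ttn mB.
set C := \bigcap_(i in _) _ => EC.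
have fac i : P [set w | B i (Y (tt i.+1) w - Y (tt i) w)] =
    P [set w | (Y t0 w < - eps)%R].
  have -> : tt i.+1 = tt i + t0 by rewrite /tt -natr1 mulrDl mul1r.
  exact: stY.
rewrite (eq_bigr _ (fun (i : 'I_m) _ => fac i)) in EC.
have Cpos : (0 < P C)%E.
  rewrite EC; elim/big_ind: _ => //; idtac.
  by move=> x y; exact: mule_gt0.
apply: (lt_le_trans Cpos); apply: le_measure; rewrite ?inE.
- apply: bigcap_measurableType => i _.
  apply: (@mpre (fun w => Y (tt i.+1) w - Y (tt i) w)) => //.
  by apply: measurable_realfun.measurable_funB; exact: mY.
- exact: mle.
move=> w Cw.
suff H k : (k <= m)%N -> Y (tt k) w <= - (k%:R * eps) by exact: H.
elim: k => [_|k IH km]; first by rewrite /tt !mul0r Y0 oppr0.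
have hk : Y (tt k.+1) w - Y (tt k) w < - eps by exact: (Cw k km).
have := IH (ltnW km); rewrite -natr1 mulrDl mul1r; lra.
Qed.

Lemma geo_bound (h q : R) : 0 <= h -> 0 < q -> q < 1 ->
  (\sum_(n <oo) (h * q ^+ n)%:E <= (h * (1 - q)^-1)%:E)%E.
Proof.
move=> h0 q0 q1.
apply: lime_le.
  by apply: is_cvg_nneseries => n _ _; rewrite lee_fin mulr_ge0 // exprn_ge0 // ltW.
apply: nearW => n; rewrite sumEFin lee_fin.
have := geometric_le_lim n h0 q0; rewrite ger0_norm ?(ltW q0) // => /(_ q1).
by rewrite /series /=.
Qed.

Lemma le_int_any (mu : {measure set T -> \bar R}) (f g : T -> \bar R) :
  (forall x, (0 <= f x)%E) -> (forall x, (f x <= g x)%E) ->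
  (\int[mu]_x f x <= \int[mu]_x g x)%E.
Proof.
move=> f0 fg; rewrite /integral.
have Hm (k : T -> \bar R) : (forall x, (0 <= k x)%E) ->
    (((fun x => k x) \_ setT)^\- = (fun=> 0))%E.
  move=> k0; apply/funext => x; rewrite patch_setT funenegE.
  by apply/max_idPr; rewrite leeNl oppe0 k0.
rewrite (Hm f f0) (Hm g (fun x => le_trans (f0 x) (fg x))).
apply: leeB => //; apply: ereal_sup_le => _ [k kf <-]; exists k => // x.
apply: le_trans (kf x) _; rewrite !patch_setT !funeposE.
by rewrite (max_l (f0 x)) (max_l (le_trans (f0 x) (fg x))).
Qed.

End Prob.

Lemma band_tau_ge0 {R : realType} (f : R -> R) a alpha beta b x n :
  (0 <= band_tau f a alpha beta b x n)%E.
Proof.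
elim: n => [|n IH]; first by rewrite /band_tau /=.
move: IH; rewrite /band_tau /=; case: (band_state _ _ _ _ _ _ n) => tau p /=.
case: tau => [r||] //= r0.
apply: le_trans r0 _; exact: exit_ge.
Qed.

Lemma tau_nstar_ge0 {R : realType} (f : R -> R) a alpha beta b x :
  (0 <= tau_at_nstar f a alpha beta b x)%E.
Proof.
apply: le_ereal_inf_tmp => _ [n _ <-]; exact: band_tau_ge0.
Qed.

Theorem lemma5 (R : realType) (d : measure_display) (T : measurableType d)
  (P : probability T R) (Y : R -> T -> R) (a alpha beta b : R) :
  is_levy P Y -> spectrally_positive P Y -> levy_tail_moment_finite P Y ->
  a < alpha -> alpha <= beta -> beta < b ->
  (\int[P]_w tau_at_nstar (Y ^~ w) a alpha beta b alpha < +oo)%E.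
Proof.
move=> hl [_ nsub] _ aal albe beb.
have [mY Y0 cY stY indY] := hl.
have [t0 [eps [t00 e0 qp]]] := exists_neg P Y hl nsub.
have t0p : 0 < t0.
  rewrite lt_neqAle t00 andbT; apply/negP => /eqP t0z.
  move: qp; rewrite -t0z.
  have -> : [set w | Y 0 w < - eps] = set0.
    by apply/seteqP; split => w //= ; rewrite Y0 => h; exfalso; lra.
  by rewrite measure0 ltxx.
pose m := (Num.truncn ((b - a) / eps)).+1.
pose h := m%:R * t0.
have hp : 0 < h by rewrite /h mulr_gt0 // ltr0n.
have meps : - (m%:R * eps) <= a - b.
  have hm := truncnS_gt ((b - a) / eps); rewrite -/m in hm.
  have : b - a < m%:R * eps by rewrite -ltr_pdivrMr.
  lra.
have pA : (0 < P [set w | (Y h w <= a - b)%R])%E.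
  apply: (lt_le_trans (pos_drop P Y t0 eps hl t00 e0 qp m)); apply: le_measure; rewrite ?inE.
  - exact: mle.
  - exact: mle.
  by move=> w /= hw; rewrite /h; lra.
pose Q := P [set w | (a - b < Y h w)%R].
have QE : Q = (1 - P [set w | (Y h w <= a - b)%R])%E.
  rewrite -probability_setC; last exact: mle.
  congr (P _); apply/seteqP; split => w /=.
  - by rewrite ltNge => /negP.
  - by move/negP; rewrite -ltNge.
have Qfin : Q \is a fin_num.
  by rewrite ge0_fin_numE ?measure_ge0 // (le_lt_trans (probability_le1 _ _)) ?ltry //; exact: mgt.
pose q := fine Q.
have Qq : Q = q%:E by rewrite fineK.
have q0 : 0 <= q by rewrite -lee_fin -Qq measure_ge0.
have q1 : q < 1.
  have pAf : P [set w | (Y h w <= a - b)%R] \is a fin_num.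
    by rewrite ge0_fin_numE ?measure_ge0 // (le_lt_trans (probability_le1 _ _)) ?ltry //; exact: mle.
  move: pA QE; rewrite Qq -(fineK pAf) lte_fin => pA'; rewrite -EFinB => -[->]; lra.
pose q' := (1 + q) / 2.
have q'0 : 0 < q' by rewrite /q'; lra.
have q'1 : q' < 1 by rewrite /q'; lra.
have qq' : q <= q' by rewrite /q'; lra.
pose B (k : nat) := [set x : R | a - b < x].
pose tt (k : nat) : R := k%:R * h.
have tt0 : 0 <= tt 0%N by rewrite /tt mul0r.
have ttge k : 0 <= tt k by rewrite /tt mulr_ge0 // ltW.
have ttn k : tt k <= tt k.+1 by rewrite /tt ler_wpM2r ?ler_nat // ltW.
have ttlt k : tt k < tt k.+1 by rewrite /tt ltr_pM2r // ltr_nat.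
have mB k : measurable (B k) by exact: mR_gt.
pose C n := \bigcap_(k in [set k | (k < n)%N])
   [set w | B k (Y (tt k.+1) w - Y (tt k) w)].
have mC n : measurable (C n).
  apply: bigcap_measurableType => k _.
  apply: (mpre (fun w => Y (tt k.+1) w - Y (tt k) w) (B k)) => //.
  by apply: measurable_realfun.measurable_funB; exact: mY.
have PC n : P (C n) = (q ^+ n)%:E.
  rewrite /C (indY n tt B tt0 ttn mB).
  have fac (i : nat) : P [set w | B i (Y (tt i.+1) w - Y (tt i) w)] = q%:E.
    rewrite -Qq.
    have -> : tt i.+1 = tt i + h by rewrite /tt -natr1 mulrDl mul1r.
    transitivity (P [set w | B i (Y h w)]); last by [].
    by apply: stY => //; rewrite ltW.
  rewrite (eq_bigr _ (fun (i : 'I_n) _ => fac i)).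
  elim: n => [|n IH]; first by rewrite big_ord0 expr0.
  by rewrite big_ord_recr /= IH -EFinM exprSr.
pose g w := (\sum_(n <oo) (h * \1_(C n) w)%:E)%E.
have f0 n x : (0 <= (h * \1_(C n) x)%:E)%E.
  by rewrite lee_fin mulr_ge0 ?(ltW hp) // indicE ler0n.
have gN w N : (forall n, (n < N)%N -> C n w) -> ((N%:R * h)%:E <= g w)%E.
  move=> HC.
  have H := @nneseries_lim_ge R (fun n => (h * \1_(C n) w)%:E) xpredT 0%N N
     (fun n _ _ => f0 n w).
  apply: le_trans H.
  rewrite sumEFin lee_fin (@eq_big_nat _ _ _ 0%N N _ (fun=> h)).
    by rewrite sumr_const_nat subn0 mulr_natl.
  by move=> n /andP[_ nN]; rewrite indicE mem_set ?mulr1 //; exact: HC.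
have taug w : (tau_at_nstar (Y ^~ w) a alpha beta b alpha <= g w)%E.
  have [[k hk]|none] := pselect (exists k, Y (tt k.+1) w - Y (tt k) w <= a - b).
  - have ex : exists k, (Y (tt k.+1) w - Y (tt k) w <= a - b) by exists k.
    case: (ex_minnP ex) => K hK Kmin.
    apply: le_trans (det_bound (Y ^~ w) a alpha beta b (tt K) (tt K.+1)
      (cY w) (Y0 w) aal albe beb (ttge K) (ttlt K) hK) _.
    apply: gN => n nK i /= iN; rewrite /B /= ltNge; apply/negP => hi.
    have Ki := Kmin i hi.
    have iK : (i < K)%N := leq_trans iN nK.
    by move: iK; rewrite ltnNge Ki.
  - have all n : C n w.
      move=> i _; rewrite /B /= ltNge; apply/negP => hi; apply: none; by exists i.
    have gi : g w = +oo%E.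
      have gN' N := gN w N (fun n _ => all n).
      case E: (g w) => [r||] //.
      + have := gN' (Num.truncn (r / h)).+1; rewrite E lee_fin.
        have := truncnS_gt (r / h); rewrite ltr_pdivrMr // => H1; by rewrite leNgt H1.
      + by have := gN' 0%N; rewrite E mul0r.
    by rewrite gi leey.
apply: (le_lt_trans (le_int_any P _ g (fun w => tau_nstar_ge0 _ _ _ _ _ _) taug)).
have mf n : measurable_fun setT (fun x => ((h * \1_(C n) x)%:E : \bar R)).
  apply/measurable_EFinP; apply: measurable_realfun.measurable_funM => //.
rewrite /g (@integral_nneseries _ _ _ P setT measurableT _ mf (fun n x _ => f0 n x)).
have Ig n : (\int[P]_x (h * \1_(C n) x)%:E = (h * q ^+ n)%:E)%E.
  have hz : (h < 0)%R -> C n = set0 by move=> hn; exfalso; lra.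
  have := @integralZl_indic _ _ _ P setT measurableT (fun=> C n) h hz (mC n).
  move=> /= ->.
  rewrite integral_indic // setIT EFinM; exact: (congr1 (fun z => (h%:E * z)%E) (PC n)).
rewrite (eq_eseriesr (fun n _ => Ig n)).
apply: (@le_lt_trans _ _ (\sum_(n <oo) (h * q' ^+ n)%:E)%E).
  apply: lee_nneseries => n _.
    by rewrite lee_fin mulr_ge0 ?(ltW hp) // exprn_ge0.
  rewrite lee_fin ler_wpM2l ?(ltW hp) // lerXn2r // nnegrE //; exact: ltW.
apply: le_lt_trans (geo_bound h q' (ltW hp) q'0 q'1) _.
exact: ltry.
Qed.
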